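(* Let $E$ be a finite set and $V \subset \mathbb R^E$ a linear subspace defining an oriented matroid $M$. If $F \subset E$ is an acyclic flat of $M$, then \[ Y_V \cap (\mathbb R_{\geq 0}^F \times \infty^{E \setminus F}) = \mathcal Y_V \cap (\mathbb R_{\geq 0}^F \times \infty^{E \setminus F}). \]
   Context: $\mathbb P^1_{\mathbb R} = \mathbb R \cup\{\infty\}$. $Y_V$ is the Zariski closure of $V$ in $(\mathbb P^1_{\mathbb R})^E$, and $\mathcal Y_V$ is the closure of $V \cap \mathbb R_{\geq 0}^E$ in $(\mathbb P^1_{\mathbb R})^E$ in the analytic topology. $\mathbb R_{\geq 0}^F \times \infty^{E\setminus F}$ is the set of points with nonnegative real coordinates on $F$ and $\infty$ on $E\setminus F$. Flats of $M$ are the zero sets $\{i : v_i = 0\}$ of $v \in V$; a flat $F$ is acyclic if some $v\in V$ has $v_i=0$ for $i\in F$ and $v_i>0$ for $i\notin F$. *)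

(* Defs.v *)
From HB Require Import structures.
From mathcomp Require Import all_boot all_order all_algebra all_field.
From mathcomp Require Import mpoly.
From mathcomp Require Import reals.

Set Implicit Arguments.
Unset Strict Implicit.
Unset Printing Implicit Defensive.

Import Order.TTheory GRing.Theory Num.Theory.
Local Open Scope ring_scope.

(* The ground set is E = 'I_n, and R^E = 'rV[R]_n. *)

(* The real projective line P^1_R = R ∪ {∞}: [Some a] is the point a, [None] is ∞. *)
Definition P1 (R : Type) := option R.

Definition P1pt (R : Type) (n : nat) := 'I_n -> P1 R.

Definition embedP1 (R : realType) (n : nat) (v : 'rV[R]_n) : P1pt R n :=
  fun i => Some (v ord0 i).

(* Standard homogeneous coordinates of a point of (P^1)^E, as a point of
   R^(E ⊔ E): coordinate [lshift n i] is x_i, coordinate [rshift n i] is y_i,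
   with a ↦ [a : 1] and ∞ ↦ [1 : 0]. *)
Definition hom_coords (R : realType) (n : nat) (p : P1pt R n) : 'I_(n + n) -> R :=
  fun k => match split k with
           | inl i => match p i with Some a => a | None => 1 end
           | inr i => match p i with Some _ => 1 | None => 0 end
           end.

Definition multihomog (R : realType) (n : nat) (d : 'I_n -> nat)
    (f : {mpoly R[n + n]}) : Prop :=
  forall m : 'X_{1.. n + n}, m \in msupp f ->
    forall i : 'I_n, (m (lshift n i) + m (rshift n i))%N = d i.

(* Y_V : the Zariski closure of V in (P^1_R)^E, i.e. the intersection of all
   Zariski closed subsets (common zero loci of multihomogeneous polynomials)
   containing V; equivalently the common zero locus of all multihomogeneous
   polynomials vanishing on V.  (Vanishing of a multihomogeneous polynomial
   does not depend on the chosen homogeneous coordinates.) *)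
Definition Y_V (R : realType) (n : nat) (V : {vspace 'rV[R]_n}) : P1pt R n -> Prop :=
  fun p => forall (d : 'I_n -> nat) (f : {mpoly R[n + n]}),
    multihomog d f ->
    (forall v, v \in V -> f.@[hom_coords (embedP1 v)] = 0) ->
    f.@[hom_coords p] = 0.

(* Basic neighbourhoods in the analytic topology of P^1_R:
   for a finite point a, the open intervals (a - eps, a + eps);
   for ∞, the sets {x : |x| > 1/eps} ∪ {∞}.  We only need to test real points b. *)
Definition P1near (R : realType) (eps : R) (q : P1 R) (b : R) : Prop :=
  match q with
  | Some a => `|b - a| < eps
  | None => eps^-1 < `|b|
  end.

(* calY_V : the closure of V ∩ R_{>=0}^E in (P^1_R)^E for the analytic
   (product) topology; the sets {q | forall i, q_i in the eps-neighbourhood of p_i}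
   (eps > 0) form a neighbourhood basis of p. *)
Definition calY_V (R : realType) (n : nat) (V : {vspace 'rV[R]_n}) : P1pt R n -> Prop :=
  fun p => forall eps : R, 0 < eps ->
    exists2 v : 'rV[R]_n, v \in V /\ (forall i, 0 <= v ord0 i) &
      forall i, P1near eps (p i) (v ord0 i).

Definition orthant_inf (R : realType) (n : nat) (F : {set 'I_n}) : P1pt R n -> Prop :=
  fun p => forall i, if i \in F then exists2 a, p i = Some a & 0 <= a
                     else p i = None.

Definition is_flat (R : realType) (n : nat) (V : {vspace 'rV[R]_n}) (F : {set 'I_n}) : Prop :=
  exists2 v, v \in V & F = [set i | v ord0 i == 0].

Definition is_acyclic_flat (R : realType) (n : nat) (V : {vspace 'rV[R]_n})
    (F : {set 'I_n}) : Prop :=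
  is_flat V F /\
  exists2 v, v \in V & forall i, (i \in F -> v ord0 i = 0) /\ (i \notin F -> 0 < v ord0 i).

(* Main.v *)
Require Import Defs.
From HB Require Import structures.
From mathcomp Require Import all_boot all_order all_algebra all_field.
From mathcomp Require Import mpoly.
From mathcomp Require Import reals.
Set Implicit Arguments.
Unset Strict Implicit.
Unset Printing Implicit Defensive.
Import Order.TTheory GRing.Theory Num.Theory.
Local Open Scope ring_scope.

Lemma split_l m k (j : 'I_m) : split (lshift k j) = inl j.
Proof. exact: (unsplitK (inl j)). Qed.
Lemma split_r m k (j : 'I_k) : split (rshift m j) = inr j.
Proof. exact: (unsplitK (inr j)). Qed.

Definition pidx n (k : 'I_(n+n)) : 'I_n := match split k with inl i => i | inr i => i end.

Lemma meval_scale (R : realType) n (d : 'I_n -> nat) (f : {mpoly R[n+n]})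
  (lam : 'I_n -> R) (x : 'I_(n+n) -> R) : multihomog d f ->
  f.@[fun k => lam (pidx k) * x k] = (\prod_i lam i ^+ d i) * f.@[x].
Proof.
move=> hf; rewrite !mevalE mulr_sumr big_seq_cond [RHS]big_seq_cond.
apply: eq_bigr => m /andP[hm _]; rewrite mulrCA; congr (_ * _).
rewrite (eq_bigr _ (fun k _ => exprMn _ _ _)) big_split /=; congr (_ * _).
rewrite big_split_ord /= -big_split /=; apply: eq_bigr => i _.
by rewrite /pidx split_l split_r -exprD hf.
Qed.

Lemma poly_nz_roots (R : realType) (G : {poly R}) :
  (forall t, t != 0 -> G.[t] = 0) -> G = 0.
Proof.
move=> h; apply/eqP; apply: contraT => hG.
pose s := [seq (k.+1)%:R : R | k <- iota 0 (size G)].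
have hall : all (root G) s.
  by apply/allP => x /mapP [k _ ->]; apply/rootP/h; rewrite pnatr_eq0.
have hu : uniq s.
  rewrite map_inj_uniq ?iota_uniq //.
  by move=> k1 k2 /eqP; rewrite eqr_nat eqSS => /eqP.
by have := max_poly_roots hG hall hu; rewrite size_map size_iota ltnn.
Qed.

Lemma Y_from (R : realType) n (V : {vspace 'rV[R]_n}) (F : {set 'I_n}) (p : P1pt R n)
  (v w : 'rV[R]_n) : v \in V -> w \in V -> (forall i, i \in F -> w ord0 i = 0) ->
  (forall i, i \notin F -> w ord0 i != 0) ->
  (forall i, i \in F -> p i = Some (v ord0 i)) -> (forall i, i \notin F -> p i = None) ->
  Y_V V p.
Proof.
move=> vV wV wF wnF pF pnF d f hf hvan.
pose X k : {poly R} := match split k with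
  | inl i => if i \in F then (v ord0 i)%:P else (v ord0 i)%:P * 'X + (w ord0 i)%:P
  | inr i => if i \in F then 1 else 'X end.
pose G := \sum_(m <- msupp f) (f@_m)%:P * \prod_k X k ^+ m k.
have GE t : G.[t] = f.@[fun k => (X k).[t]].
  rewrite mevalE horner_sum; apply: eq_bigr => m _.
  rewrite hornerM hornerC horner_prod; congr (_ * _).
  by apply: eq_bigr => k _; rewrite horner_exp.
have Gt t : t != 0 -> G.[t] = 0.
  move=> t0; rewrite GE.
  pose lam i := if i \in F then 1 else t.
  transitivity (f.@[fun k => lam (pidx k) * hom_coords (embedP1 (v + t^-1 *: w)) k]).
    apply: meval_eq => k; rewrite /X /pidx /hom_coords /embedP1 /lam.
    case: (split k) => i; case: (boolP (i \in F)) => iF;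
      rewrite ?hornerE ?mxE ?mul1r ?mulr1 //.
      by rewrite wF // mulr0 addr0.
    by rewrite mulrDr mulrA divff // mul1r mulrC.
  by rewrite (meval_scale _ _ hf) hvan ?mulr0 // memvD // memvZ.
have G0 : G = 0 by apply: poly_nz_roots.
have := GE 0; rewrite G0 horner0 => /esym H0.
pose mu i := if i \in F then 1 else w ord0 i.
have : f.@[fun k => mu (pidx k) * hom_coords p k] = 0.
  rewrite -H0; apply: meval_eq => k; rewrite /X /pidx /hom_coords /mu.
  case: (split k) => i; case: (boolP (i \in F)) => iF.
  - by rewrite pF // !hornerE ?mul1r.
  - by rewrite pnF // !hornerE ?mulr0 ?add0r ?mulr1.
  - by rewrite pF // !hornerE ?mul1r.
  - by rewrite pnF // !hornerE ?mulr0.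
rewrite (meval_scale _ _ hf) => /eqP; rewrite mulf_eq0 => /orP [|/eqP //].
move/prodf_eq0 => [i _]; rewrite expf_eq0 /mu.
by case: (boolP (i \in F)) => iF; rewrite ?oner_eq0 ?andbF // (negbTE (wnF i iF)) andbF.
Qed.
From mathcomp Require Import lra.
From Stdlib Require Classical_Prop.
Lemma sep (R : realType) n (V : {vspace 'rV[R]_n}) (F : {set 'I_n}) (a : 'I_n -> R) :
 ~ (exists2 v, v \in V & forall i, i \in F -> v ord0 i = a i) ->
 exists c : 'I_n -> R, (forall v, v \in V -> \sum_(i in F) c i * v ord0 i = 0)
   /\ \sum_(i in F) c i * a i != 0.
Proof.
move=> hna.
pose D : 'M[R]_n := diag_mx (\row_i ((i \in F)%:R : R)).
pose r := linfun (@mulmxr R 1 n n D).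
have rE x i : r x ord0 i = if i \in F then x ord0 i else 0.
  by rewrite lfunE /= mul_mx_diag !mxE; case: (i \in F); rewrite ?mulr1 ?mulr0.
pose W := (r @: V)%VS.
pose u : 'rV[R]_n := \row_i (if i \in F then a i else 0).
have uW : u \notin W.
  apply/negP => /memv_imgP [v vV eu]; apply: hna; exists v => // i iF.
  by have := congr1 (fun z : 'rV_n => z ord0 i) eu; rewrite /= rE mxE iF => <-.
have hpu : u - projv W u != 0.
  by apply: contra uW; rewrite subr_eq0 => /eqP ->; exact: memv_proj.
have /existsP [k hk] : [exists k, (u - projv W u) ord0 k != 0].
  apply: contraR hpu => /existsPn h; apply/eqP/rowP => j.
  by have := h j; rewrite negbK => /eqP ->; rewrite mxE.
pose phi (x : 'rV[R]_n) := (x - projv W x) ord0 k.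
exists (fun j => phi (delta_mx 0 j)).
have phiE x : phi x = \sum_j phi (delta_mx 0 j) * x ord0 j.
  rewrite /phi {1 2}(row_sum_delta x) linear_sum -sumrB summxE.
  apply: eq_bigr => j _; rewrite linearZ /= -scalerBr mxE mulrC.
  by [].
have phiF x : phi (r x) = \sum_(j in F) phi (delta_mx 0 j) * x ord0 j.
  rewrite phiE [RHS]big_mkcond /=; apply: eq_bigr => j _; rewrite rE.
  by case: (j \in F); rewrite ?mulr0.
split.
  move=> v vV; rewrite -phiF /phi projv_id ?subrr ?mxE //.
  exact: memv_img.
have -> : \sum_(j in F) phi (delta_mx 0 j) * a j = phi u.
  rewrite [phi u]phiE big_mkcond /=; apply: eq_bigr => j _; rewrite mxE.
  by case: (j \in F); rewrite ?mulr0.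
exact: hk.
Qed.
Lemma fpoly (R : realType) n (F : {set 'I_n}) (c : 'I_n -> R) :
  exists f : {mpoly R[n+n]}, multihomog (fun i => nat_of_bool (i \in F)) f /\
   forall x : 'I_(n+n) -> R, (forall j, j \in F -> x (rshift n j) = 1) ->
     f.@[x] = \sum_(i in F) c i * x (lshift n i).
Proof.
pose mi (i : 'I_n) : 'X_{1.. n + n} := [multinom (match split k with
   | inl j => nat_of_bool (j == i) | inr j => nat_of_bool ((j \in F) && (j != i)) end) | k < n + n].
have miL i j : mi i (lshift n j) = (j == i) by rewrite mnmE split_l.
have miR i j : mi i (rshift n j) = ((j \in F) && (j != i)) by rewrite mnmE split_r.
exists (\sum_(i in F) c i *: 'X_[mi i]); split.
  move=> m /msupp_sum_le /flattenP [s /mapP [i]].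
  rewrite mem_filter => /andP [iF _] -> /msuppZ_le; rewrite msuppX inE => /eqP -> j.
  rewrite miL miR; case: eqVneq => [->|]; first by rewrite iF.
  by rewrite andbT.
move=> x hx.
rewrite (big_morph (meval x) (mevalD x) (meval0 x)); apply: eq_bigr => i iF.
rewrite mevalZ mevalX big_split_ord /=; congr (_ * _).
rewrite [\prod_(i0 < n) x (rshift n i0) ^+ _]big1 ?mulr1.
  rewrite (bigD1 i) //= big1 ?mulr1 ?miL ?eqxx ?expr1 //.
  by move=> j /negbTE nji; rewrite miL nji expr0.
move=> j _; rewrite miR; case: (boolP (j \in F)) => jF /=; last by rewrite expr0.
by rewrite hx // expr1n.
Qed.

Unset Implicit Arguments.
Theorem lemma3p3 (R : realType) (n : nat) (V : {vspace 'rV[R]_n}) (F : {set 'I_n}) :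
  is_acyclic_flat V F ->
  forall p : P1pt R n,
    (Y_V V p /\ orthant_inf F p) <-> (calY_V V p /\ orthant_inf F p).
Proof.
move=> [_ [w wV hw]] p.
have wF i : i \in F -> w ord0 i = 0 by move=> /(proj1 (hw i)).
have wnF i : i \notin F -> 0 < w ord0 i by move=> /(proj2 (hw i)).
pose ap i := odflt 0 (p i).
have oF (Ho : orthant_inf F p) i : i \in F -> p i = Some (ap i) /\ 0 <= ap i.
  by move=> iF; have := Ho i; rewrite iF /ap => -[a -> a0].
have onF (Ho : orthant_inf F p) i : i \notin F -> p i = None.
  by move=> iF; have := Ho i; rewrite (negbTE iF).
split => -[H Ho]; split => //.
- have [v vV hv] : exists2 v, v \in V & forall i, i \in F -> v ord0 i = ap i.
    apply: Classical_Prop.NNPP => hn; have [c [hc hca]] := sep hn.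
    have [f [hf hfE]] := fpoly F c.
    have := H _ f hf.
    have -> : f.@[hom_coords p] = \sum_(i in F) c i * ap i.
      rewrite hfE; last by move=> j jF; rewrite /hom_coords split_r (proj1 (oF Ho j jF)).
      by apply: eq_bigr => i iF; rewrite /hom_coords split_l (proj1 (oF Ho i iF)).
    move=> h; move/eqP: hca; apply; apply: h => u uV.
    rewrite hfE; last by move=> j _; rewrite /hom_coords split_r /embedP1.
    by rewrite -[RHS](hc u uV); apply: eq_bigr => i _; rewrite /hom_coords split_l /embedP1.
  move=> eps eps0.
  pose M := eps^-1 + \sum_i `|v ord0 i| + 1.
  pose s := \sum_(i in ~: F) M / w ord0 i.
  have Sv0 : 0 <= \sum_i `|v ord0 i| by apply: sumr_ge0 => i _.
  have ei0 : 0 < eps^-1 by rewrite invr_gt0.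
  have M0 : 0 < M by rewrite /M; lra.
  have sw i : i \notin F -> M <= s * w ord0 i.
    move=> iF; rewrite -ler_pdivrMr ?wnF // /s (bigD1 i) ?inE //= lerDl.
    by apply: sumr_ge0 => j /andP[]; rewrite inE => jF _; rewrite divr_ge0 ?ltW ?wnF.
  have vle i : `|v ord0 i| <= \sum_j `|v ord0 j|.
    by rewrite (bigD1 i) //= lerDl; apply: sumr_ge0.
  have big i : i \notin F -> eps^-1 < v ord0 i + s * w ord0 i.
    move=> iF; have := sw i iF; have := vle i; have := ler_norm (- v ord0 i).
    rewrite normrN /M; lra.
  exists (v + s *: w).
    split; first by rewrite memvD // memvZ.
    move=> i; rewrite !mxE; case: (boolP (i \in F)) => iF.
      by rewrite wF // mulr0 addr0 hv //; exact: (proj2 (oF Ho i iF)).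
    by have := big i iF; lra.
  move=> i; rewrite /P1near !mxE; case: (boolP (i \in F)) => iF.
    by rewrite (proj1 (oF Ho i iF)) wF // mulr0 addr0 hv // subrr normr0.
  rewrite onF // ger0_norm; first exact: big.
  by have := big i iF; lra.
- have [v vV hv] : exists2 v, v \in V & forall i, i \in F -> v ord0 i = ap i.
    apply: Classical_Prop.NNPP => hn; have [c [hc hca]] := sep hn.
    pose S := \sum_(i in F) c i * ap i.
    pose C := \sum_(i in F) `|c i|.
    have C0 : 0 <= C by apply: sumr_ge0.
    pose eps := `|S| / (C + 1).
    have S0 : 0 < `|S| by rewrite normr_gt0.
    have eps0 : 0 < eps by rewrite divr_gt0 //; lra.
    have [u [uV _] hu] := H eps eps0.
    have hS : S = \sum_(i in F) c i * (ap i - u ord0 i).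
      under eq_bigr do rewrite mulrBr.
      by rewrite sumrB (hc u uV) subr0.
    have h1 : `|S| <= C * eps.
      rewrite hS; apply: le_trans (ler_norm_sum _ _ _) _.
      rewrite /C mulr_suml; apply: ler_sum => i iF.
      rewrite normrM ler_wpM2l //; have := hu i.
      by rewrite /P1near (proj1 (oF Ho i iF)) distrC => /ltW.
    have h2 : C * eps < `|S|.
      have -> : `|S| = (C + 1) * eps by rewrite /eps mulrC divfK //; lra.
      lra.
    lra.
  apply: (Y_from vV wV wF).
  - by move=> i iF; rewrite gt_eqF // wnF.
  - by move=> i iF; rewrite hv //; exact: (proj1 (oF Ho i iF)).
  - exact: onF.
Qed.
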